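(* Let $P=(x_i,y_i)_{i=1}^k$ be point pairs in $\mathbb P^2\times\mathbb P^2$, let $Z$ be the $k\times 9$ matrix with rows $x_i^\top\otimes y_i^\top$, and let $\mathcal N_Z\subset\mathbb P(\mathbb C^{3\times3})$ be its projective nullspace. Suppose $\mathcal N_Z$ contains a generic line $\ell$, passing through the three rank-two matrices $F_1,F_2,F_3$. Then for every $j\in\{1,2,3\}$ there is no index $i$ with both $y_i^\top F_j=0$ and $F_jx_i=0$.
   Context: Work over $\mathbb C$; identify $\mathbb C^{3\times3}$ with $\mathbb C^9$ by column-stacking so that $(x^\top\otimes y^\top)\operatorname{vec}(M)=y^\top Mx$. A line in $\mathbb P(\mathbb C^{3\times3})$ is generic if it contains exactly three rank-two matrices. *)

(* Defs.v *)
From HB Require Import structures.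
From mathcomp Require Import all_boot all_order all_algebra.
From mathcomp Require Import reals.
From mathcomp Require Export complex mxtens.
Set Implicit Arguments. Unset Strict Implicit. Unset Printing Implicit Defensive.
Import Order.TTheory GRing.Theory Num.Theory.
Local Open Scope ring_scope.

(* Column-stacking vectorization: vecc M at index 3*a+b is M b a,
   so that ((x^T) *t (y^T)) *m vecc M = y^T M x. *)
Definition vecc (F : fieldType) (M : 'M[F]_3) : 'cV[F]_(3 * 3) := (mxvec M^T)^T.

Definition Zmat (F : fieldType) (k : nat) (x y : 'I_k -> 'cV[F]_3) : 'M[F]_(k, 3 * 3) :=
  \matrix_(i < k) row ord0 ((x i)^T *t (y i)^T).

Definition in_nullspace (F : fieldType) k (Z : 'M[F]_(k, 3 * 3)) (M : 'M[F]_3) :=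
  M != 0 /\ Z *m vecc M = 0.

Definition lin_indep2 (F : fieldType) (A B : 'M[F]_3) :=
  forall a b : F, a *: A + b *: B = 0 -> a = 0 /\ b = 0.

Definition on_line (F : fieldType) (A B M : 'M[F]_3) :=
  M != 0 /\ exists a b : F, M = a *: A + b *: B.

Definition proj_eq (F : fieldType) (M N : 'M[F]_3) :=
  exists c : F, c != 0 /\ N = c *: M.

Definition generic_line (F : fieldType) (A B : 'M[F]_3) :=
  lin_indep2 A B /\
  exists G : 'I_3 -> 'M[F]_3,
    (forall j, on_line A B (G j) /\ \rank (G j) = 2%N) /\
    (forall j j', j != j' -> ~ proj_eq (G j) (G j')) /\
    (forall M, on_line A B M -> \rank M = 2%N -> exists j, proj_eq (G j) M).

(* Main.v *)
Require Import Defs.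
From HB Require Import structures.
From mathcomp Require Import all_boot all_order all_algebra.
From mathcomp Require Import reals.
From mathcomp Require Import complex mxtens.
From mathcomp Require Import ring.
Import Order.TTheory GRing.Theory Num.Theory.
Local Open Scope ring_scope.
Set Implicit Arguments. Unset Strict Implicit. Unset Printing Implicit Defensive.

Lemma idx3 (a b : 'I_3) : mxtens_index (a,b) = mxvec_index a b.
Proof.
apply: val_inj; rewrite /= /enum_rank enum_rank_in.unlock insubdK; last first.
  by rewrite unfold_in /= cardE index_mem mem_enum.
rewrite enumT unlock /= /prod_enum !enumT !unlock /=.
have -> : ord_enum 3 = [:: Ordinal (isT : 0 < 3)%N; Ordinal (isT : 1 < 3)%N; Ordinal (isT : 2 < 3)%N].
  by apply: (inj_map val_inj); rewrite val_ord_enum.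
case: a b => [[|[|[|?]]] ?] [[|[|[|?]]] ?] //=; rewrite /index /= ?xpair_eqE; try by [].
Qed.

Lemma bil (K : fieldType) (x y : 'cV[K]_3) (G : 'M[K]_3) :
  ((x^T *t y^T) *m vecc G) 0 0 = (y^T *m G *m x) 0 0.
Proof.
rewrite !mxE (reindex (@mxtens_index 3 3)) /=; last first.
  by exists (@mxtens_unindex 3 3) => p _; rewrite (@mxtens_indexK 3 3, @mxtens_unindexK 3 3).
transitivity (\sum_(p : 'I_3 * 'I_3) x p.1 0 * y p.2 0 * G p.2 p.1).
  apply: eq_bigr => -[a b] _.
  by rewrite /vecc !mxE (@mxtens_indexK 3 3) /= idx3 mxvecE !mxE !ord1.
rewrite -(pair_bigA _ (fun a b => x a 0 * y b 0 * G b a)) /=; apply: eq_bigr => a _.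
rewrite mxE mulr_suml; apply: eq_bigr => b _.
rewrite !mxE; ring.
Qed.

Lemma null_bil (K : fieldType) k (x y : 'I_k -> 'cV[K]_3) (M : 'M[K]_3) i :
  Zmat x y *m vecc M = 0 -> (y i)^T *m M *m x i = 0.
Proof.
move=> h; apply/matrixP => a b; rewrite !ord1 [RHS]mxE -bil.
move/matrixP: h => /(_ i 0); rewrite [RHS]mxE => <-.
rewrite !mxE; apply: eq_bigr => kk _; rewrite !mxE.
by have -> : (0 : 'I_(1*1)) = ord0 by apply: val_inj.
Qed.

Section D.
Variable K : comNzRingType.

Lemma det2 (B : 'M[K]_2) (g : nat -> nat -> K) (hg : forall o o' : 'I_2, B o o' = g o o') :
  \det B = g 0 0 * g 1 1 - g 0 1 * g 1 0.
Proof.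
rewrite (expand_det_row _ ord0) !big_ord_recr big_ord0 /= /cofactor !det_mx11 !mxE !hg /bump /=.
rewrite expr0 expr1; ring.
Qed.

Definition D3 (f : nat -> nat -> K) :=
  f 0 0 * (f 1 1 * f 2 2 - f 1 2 * f 2 1)
  - f 0 1 * (f 1 0 * f 2 2 - f 1 2 * f 2 0)
  + f 0 2 * (f 1 0 * f 2 1 - f 1 1 * f 2 0).

Lemma det3 (A : 'M[K]_3) (f : nat -> nat -> K) (hf : forall o o' : 'I_3, A o o' = f o o') :
  \det A = D3 f.
Proof.
rewrite (expand_det_row _ ord0) !big_ord_recr big_ord0 /= /cofactor.
rewrite !(@expand_det_row _ 2 _ ord0) !big_ord_recr !big_ord0 /= /cofactor !det_mx11 !mxE !hf /bump /D3 /=.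
rewrite !expr0 !expr1 expr2; ring.
Qed.

Lemma adj3 (A : 'M[K]_3) (f : nat -> nat -> K) (hf : forall o o' : 'I_3, A o o' = f o o') :
  forall i j : 'I_3, \adj A i j = (-1) ^+ (j + i) * (
     f (bump j 0) (bump i 0) * f (bump j 1) (bump i 1) - f (bump j 0) (bump i 1) * f (bump j 1) (bump i 0)).
Proof.
move=> i j; rewrite !mxE /cofactor (@expand_det_row _ 2 _ ord0) !big_ord_recr !big_ord0 /= /cofactor !det_mx11 !mxE !hf /bump /=.
rewrite expr0 expr1; ring.
Qed.

Lemma detD3 (F G : 'M[K]_3) t : \det (F + t *: G) =
  \det F + t * \tr (\adj F *m G) + t^+2 * \tr (\adj G *m F) + t^+3 * \det G.
Proof.
pose fF (i j : nat) := F (inord i) (inord j).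
pose fG (i j : nat) := G (inord i) (inord j).
have hF : forall o o' : 'I_3, F o o' = fF o o' by move=> o o'; rewrite /fF !inord_val.
have hG : forall o o' : 'I_3, G o o' = fG o o' by move=> o o'; rewrite /fG !inord_val.
have hFG : forall o o' : 'I_3, (F + t *: G) o o' = fF o o' + t * fG o o'.
  by move=> o o'; rewrite !mxE hF hG.
clearbody fF fG.
rewrite (@det3 _ (fun (i j : nat) => fF i j + t * fG i j) hFG) (det3 hF) (det3 hG).
rewrite /mxtrace !big_ord_recr !big_ord0 /=.
rewrite !mxE !big_ord_recr !big_ord0 /= !(adj3 hF) !(adj3 hG) !hF !hG /bump /D3 /=.
rewrite !expr0 ?expr1 ?expr2 ?exprS ?expr0; ring.
Qed.
End D.

Section LA.
Variable K : fieldType.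

Lemma rank2_det (M : 'M[K]_3) : \rank M = 2%N -> \det M = 0.
Proof.
move=> r; case: (eqVneq (\det M) 0) => // hd.
have : M \in unitmx by rewrite unitmxE unitfE.
by move/mxrank_unit; rewrite r.
Qed.

Lemma det0_rank (M : 'M[K]_3) : \det M = 0 -> (\rank M <= 2)%N.
Proof.
move=> hd; rewrite leqNgt; apply/negP => h.
have : row_free M by rewrite /row_free eqn_leq rank_leq_row h.
by rewrite row_free_unit unitmxE unitfE hd eqxx.
Qed.

Lemma ker1 (M : 'M[K]_3) (v : 'rV_3) m (A : 'M_(m,3)) :
  \rank M = 2%N -> v != 0 -> v *m M = 0 -> A *m M = 0 -> exists D : 'M_(m,1), A = D *m v.
Proof.
move=> r nv hv0 hA0.
have hv : (v <= kermx M)%MS by apply/sub_kermxP.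
have hA : (A <= kermx M)%MS by apply/sub_kermxP.
have rk : \rank (kermx M) = 1%N by rewrite mxrank_ker r.
have e : (kermx M <= v)%MS by rewrite -(mxrank_leqif_sup hv).2 rank_rV nv rk.
by case/submxP: (submx_trans hA e) => D ->; exists D.
Qed.

Lemma colrow0 m n (C : 'M[K]_(m,1)) (r : 'rV[K]_n) : r != 0 -> C *m r = 0 -> C = 0.
Proof.
move=> nr h.
have [b hb] : exists b, r 0 b != 0.
  apply/existsP; apply: contraNT nr => /existsPn hr; apply/eqP/rowP => b.
  by rewrite mxE; move: (hr b); rewrite negbK => /eqP.
apply/matrixP => i j; rewrite ord1 mxE.
move/matrixP: h => /(_ i b); rewrite !mxE big_ord1 => /eqP.
by rewrite mulf_eq0 (negbTE hb) orbF => /eqP.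
Qed.

Lemma adj_rank2 (F : 'M[K]_3) (x y : 'cV[K]_3) :
  \rank F = 2%N -> x != 0 -> y != 0 -> F *m x = 0 -> y^T *m F = 0 ->
  exists c : 'M[K]_1, \adj F = x *m c *m y^T.
Proof.
move=> r nx ny hx hy.
have hd := rank2_det r.
have h1 : \adj F *m F = 0 by rewrite mul_adj_mx hd raddf0.
have h2 : F *m \adj F = 0 by rewrite mul_mx_adj hd raddf0.
have nyT : y^T != 0 by rewrite trmx_eq0.
have nxT : x^T != 0 by rewrite trmx_eq0.
have [D hD] := ker1 r nyT hy h1.
have h3 : F *m D = 0.
  by apply: (colrow0 nyT); rewrite -mulmxA -hD.
have h4 : D^T *m F^T = 0 by rewrite -trmx_mul h3 trmx0.
have h5 : x^T *m F^T = 0 by rewrite -trmx_mul hx trmx0.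
have rT : \rank F^T = 2%N by rewrite mxrank_tr.
have [E hE] := ker1 rT nxT h5 h4.
exists E^T; rewrite hD -[D]trmxK hE trmx_mul trmxK.
by [].
Qed.

Lemma tr_adj0 (F G : 'M[K]_3) (x y : 'cV[K]_3) (c : 'M[K]_1) :
  \adj F = x *m c *m y^T -> y^T *m G *m x = 0 -> \tr (\adj F *m G) = 0.
Proof.
move=> h hG; rewrite h -!mulmxA mxtrace_mulC -!mulmxA.
by rewrite [y^T *m (G *m x)]mulmxA hG !mulmx0 mxtrace0.
Qed.

Lemma indep (P Q : 'M[K]_3) : P != 0 -> Q != 0 -> ~ proj_eq P Q ->
  forall u v, u *: P + v *: Q = 0 -> u = 0 /\ v = 0.
Proof.
move=> nP nQ npq u v h; case: (eqVneq v 0) => [v0|vn0].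
  move: h; rewrite v0 scale0r addr0 => /eqP; rewrite scaler_eq0 (negbTE nP) orbF.
  by move/eqP.
exfalso; apply: npq.
have hQ : Q = (- u / v) *: P.
  apply/matrixP => r s; move/matrixP: h => /(_ r s); rewrite !mxE => /eqP.
  rewrite addr_eq0 => /eqP e.
  by rewrite mulrAC mulNr e opprK mulrAC mulfV // mul1r.
exists (- u / v); split => //.
apply: contraNneq nQ => c0; by rewrite hQ c0 scale0r.
Qed.
End LA.

Lemma span (K : fieldType) (A B F0 F1 F2 : 'M[K]_3) : F0 != 0 -> F1 != 0 -> ~ proj_eq F0 F1 ->
  on_line A B F0 -> on_line A B F1 -> on_line A B F2 -> exists u v, F2 = u *: F0 + v *: F1.
Proof.
move=> nF0 nF1 npq [_ [a1 [b1 e0]]] [_ [a2 [b2 e1]]] [_ [al [be e2]]].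
have hi := indep nF0 nF1 npq.
have nD : a1 * b2 - a2 * b1 != 0.
  apply/eqP => D0.
  have h1 : b2 *: F0 + (- b1) *: F1 = (a1 * b2 - a2 * b1) *: A.
    by apply/matrixP => r s; rewrite e0 e1 !mxE; ring.
  have h2 : (- a2) *: F0 + a1 *: F1 = (a1 * b2 - a2 * b1) *: B.
    by apply/matrixP => r s; rewrite e0 e1 !mxE; ring.
  rewrite D0 scale0r in h1; rewrite D0 scale0r in h2.
  have [b20 /eqP] := hi _ _ h1; rewrite oppr_eq0 => /eqP b10.
  have [_ a10] := hi _ _ h2.
  by move/negP: nF0; apply; rewrite e0 a10 b10 !scale0r addr0.
exists ((al * b2 - be * a2) / (a1 * b2 - a2 * b1)), ((be * a1 - al * b1) / (a1 * b2 - a2 * b1)).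
apply/matrixP => r s; rewrite e2 e0 e1 !mxE.
by field.
Qed.

Lemma core (K : numFieldType) (A B F0 F1 F2 : 'M[K]_3) (x y : 'cV[K]_3) (G : 'I_3 -> 'M[K]_3) :
  (forall M, on_line A B M -> \rank M = 2%N -> exists j, proj_eq (G j) M) ->
  on_line A B F0 -> on_line A B F1 -> on_line A B F2 ->
  \rank F0 = 2%N -> \rank F1 = 2%N -> \rank F2 = 2%N ->
  ~ proj_eq F0 F1 -> ~ proj_eq F1 F2 -> ~ proj_eq F0 F2 ->
  x != 0 -> y != 0 -> F0 *m x = 0 -> y^T *m F0 = 0 -> y^T *m F1 *m x = 0 -> False.
Proof.
move=> hG l0 l1 l2 r0 r1 r2 n01 n12 n02 nx ny hx hy h1.
have nF0 : F0 != 0 by case: l0.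
have nF1 : F1 != 0 by case: l1.
have nF2 : F2 != 0 by case: l2.
have hi := indep nF0 nF1 n01.
have [u [v e2]] := span nF0 nF1 n01 l0 l1 l2.
have nu : u != 0.
  apply/eqP => u0; apply: n12; exists v; split; last by rewrite e2 u0 scale0r add0r.
  apply/eqP => v0; move/negP: nF2; apply; by rewrite e2 u0 v0 !scale0r addr0.
have nv : v != 0.
  apply/eqP => v0; apply: n02; exists u; split; last by rewrite e2 v0 scale0r addr0.
  exact: nu.
have [c hc] := adj_rank2 r0 nx ny hx hy.
have t0 : \tr (\adj F0 *m F1) = 0 := tr_adj0 hc h1.
have hdt : forall t, \det (F0 + t *: F1) = t ^+ 2 * \tr (\adj F1 *m F0).
  move=> t; rewrite detD3 (rank2_det r0) t0 (rank2_det r1).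
  by rewrite !mulr0 !addr0 add0r.
have e0 : \tr (\adj F1 *m F0) = 0.
  have : \det F2 = 0 := rank2_det r2.
  have -> : F2 = u *: (F0 + (v / u) *: F1).
    by apply/matrixP => r s; rewrite e2 !mxE; field.
  rewrite detZ hdt => /eqP; rewrite !mulf_eq0 invr_eq0 (negbTE nu) (negbTE nv) /=.
  by move/eqP.
have hdet : forall t, \det (F0 + t *: F1) = 0 by move=> t; rewrite hdt e0 mulr0.
have hLU := mulmx_ebase F0; rewrite r0 in hLU.
pose P := (pid_mx 2 : 'M[K]_(2,3)) *m invmx (col_ebase F0).
pose Q := invmx (row_ebase F0) *m (pid_mx 2 : 'M[K]_(3,2)).
have hPQ : P *m (col_ebase F0 *m pid_mx 2 *m row_ebase F0) *m Q = 1%:M.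
  rewrite /P /Q !mulmxA mulmxKV ?col_ebase_unit // mulmxK ?row_ebase_unit //.
  by rewrite !pid_mx_id // pid_mx_1.
rewrite hLU in hPQ.
pose N := P *m F1 *m Q.
have hPMQ : forall t, P *m (F0 + t *: F1) *m Q = 1%:M + t *: N.
  by move=> t; rewrite mulmxDr mulmxDl hPQ -scalemxAr -scalemxAl.
have hq : forall t, \det (1%:M + t *: N) = 1 + t * (N 0 0 + N 1 1) + t ^+ 2 * \det N.
  move=> t.
  have hg : forall o o' : 'I_2, (1%:M + t *: N) o o' = ((o == o' :> nat)%:R : K) + t * N (inord o) (inord o').
    by move=> o o'; rewrite !mxE !inord_val.
  have hN : forall o o' : 'I_2, N o o' = N (inord o) (inord o').
    by move=> o o'; rewrite !inord_val.
  rewrite (@det2 _ _ (fun i j : nat => ((i == j)%:R : K) + t * N (inord i) (inord j)) hg) (@det2 _ _ (fun i j : nat => N (inord i) (inord j)) hN) /=.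
  have -> : inord 0 = 0 :> 'I_2 by apply: val_inj; rewrite /= inordK.
  have -> : inord 1 = 1 :> 'I_2 by apply: val_inj; rewrite /= inordK.
  ring.
pose qp : {poly K} := Poly [:: 1; N 0 0 + N 1 1; \det N].
have hqp : forall t, qp.[t] = \det (1%:M + t *: N).
  by move=> t; rewrite horner_Poly /= hq; ring.
have nqp : qp != 0.
  apply/eqP => h; have := coef_Poly [:: 1; N 0 0 + N 1 1; \det N] 0.
  by rewrite -/qp h coef0 /= => /eqP; rewrite eq_sym oner_eq0.
have sqp : (size qp <= 3)%N := size_Poly _.
have hrk : forall t, qp.[t] != 0 -> \rank (F0 + t *: F1)%R = 2%N.
  move=> t ht; apply/eqP; rewrite eqn_leq det0_rank ?hdet //=.
  have : \rank (P *m (F0 + t *: F1)%R *m Q) = 2%N.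
    by rewrite hPMQ; apply: mxrank_unit; rewrite unitmxE unitfE -hqp.
  move=> h2; rewrite -[X in (X <= _)%N]h2.
  apply: leq_trans (mxrankM_maxl _ _) _; exact: mxrankM_maxr.
have hl : forall t, on_line A B (F0 + t *: F1).
  move=> t; split.
    apply/eqP => h0; have [] := hi 1 t; first by rewrite scale1r.
    by move/eqP; rewrite oner_eq0.
  case: l0 l1 => _ [a1 [b1 f0]] [_ [a2 [b2 f1]]].
  exists (a1 + t * a2), (b1 + t * b2).
  by apply/matrixP => r s; rewrite f0 f1 !mxE; ring.
have hinj : forall (jj : 'I_3) (t1 t2 : K), proj_eq (G jj) (F0 + t1 *: F1) ->
    proj_eq (G jj) (F0 + t2 *: F1) -> t1 = t2.
  move=> jj t1 t2 [c1 [nc1 h1']] [c2 [nc2 h2']].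
  have : (1 - c2 / c1) *: F0 + (t2 - c2 / c1 * t1) *: F1 = 0.
    apply/matrixP => r s; move/matrixP: h1' => /(_ r s); move/matrixP: h2' => /(_ r s).
    rewrite !mxE => E2 E1.
    have -> : (1 - c2 / c1) * F0 r s + (t2 - c2 / c1 * t1) * F1 r s =
      (F0 r s + t2 * F1 r s) - c2 / c1 * (F0 r s + t1 * F1 r s) by ring.
    by rewrite E1 E2; field.
  move/hi => [hcc ht].
  have hc1 : c2 / c1 = 1 by apply/eqP; rewrite eq_sym -subr_eq0 hcc.
  by move: ht; rewrite hc1 mul1r => /eqP; rewrite subr_eq0 => /eqP.
pose S := [set n : 'I_6 | qp.[(n : nat)%:R] != 0].
have hex : forall n : 'I_6, exists jj : 'I_3, n \in S -> proj_eq (G jj) (F0 + (n : nat)%:R *: F1).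
  move=> n; case: (boolP (n \in S)) => hn.
    have hq' : qp.[(n : nat)%:R] != 0 by move: hn; rewrite inE.
    have [jj hjj] := hG _ (hl _) (hrk _ hq').
    by exists jj.
  by exists ord0.
have [f hf] := fin_all_exists hex.
have finj : {in S &, injective f}.
  move=> n m hn hm hfe.
  have h2 := hf m hm; rewrite -hfe in h2.
  have := hinj _ _ _ (hf n hn) h2 => /eqP; rewrite eqr_nat => /eqP; exact: val_inj.
have c1 : (#|S| <= 3)%N.
  by rewrite -(card_in_imset finj); apply: leq_trans (max_card _) _; rewrite card_ord.
have c2 : (#|~: S| <= 2)%N.
  pose rs := [seq ((val n)%:R : K) | n : 'I_6 <- enum (~: S)].
  have hall : all (root qp) rs.
    apply/allP => z /mapP [n]; rewrite mem_enum in_setC inE negbK => /eqP hn ->.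
    by apply/rootP.
  have hu : uniq rs.
    rewrite map_inj_uniq ?enum_uniq // => a b /eqP; rewrite eqr_nat => /eqP; exact: val_inj.
  have := max_poly_roots nqp hall hu; rewrite size_map -cardE => h.
  by have := leq_trans h sqp.
by have := leq_add c1 c2; rewrite cardsC card_ord.
Qed.

Unset Implicit Arguments.
Theorem mainTheorem15 (R : realType) (k : nat)
    (x y : 'I_k -> 'cV[R[i]]_3)
    (hx : forall i, x i != 0) (hy : forall i, y i != 0)
    (A B : 'M[R[i]]_3)
    (hgen : generic_line A B)
    (hsub : forall M, on_line A B M -> in_nullspace (Zmat x y) M)
    (F : 'I_3 -> 'M[R[i]]_3)
    (hF : forall j, on_line A B (F j) /\ \rank (F j) = 2%N)
    (hFd : forall j j', j != j' -> ~ proj_eq (F j) (F j')) :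
  forall j : 'I_3, ~ exists i : 'I_k, (y i)^T *m F j = 0 /\ F j *m x i = 0.
Proof.
move=> j [i [hyi hxi]].
have [_ [Gf [_ [_ hG]]]] := hgen.
have h1 : forall M, on_line A B M -> (y i)^T *m M *m x i = 0.
  by move=> M hM; apply: null_bil; case: (hsub M hM).
have key : forall j0 j1 j2 : 'I_3, j0 != j1 -> j1 != j2 -> j0 != j2 ->
    (y i)^T *m F j0 = 0 -> F j0 *m x i = 0 -> False.
  move=> j0 j1 j2 d01 d12 d02 hyj hxj.
  exact: (core hG (hF j0).1 (hF j1).1 (hF j2).1 (hF j0).2 (hF j1).2 (hF j2).2
    (hFd _ _ d01) (hFd _ _ d12) (hFd _ _ d02) (hx i) (hy i) hxj hyj (h1 _ (hF j1).1)).
case: j hyi hxi => [[|[|[|?]]] Hj] // hyi hxi.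
- by apply: (key _ 1 2 _ _ _ hyi hxi).
- by apply: (key _ 0 2 _ _ _ hyi hxi).
- by apply: (key _ 0 1 _ _ _ hyi hxi).
Qed.
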